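(* Let $H$ be a complex Hilbert space and $\{\mathcal{U}(t)\}_{t\geq 0}$ a strongly continuous semigroup on $H$ with generator $\mathcal{L}$. Let $z\in D(\mathcal{L}^\dagger)$ with $z\neq 0$, let $\mathcal{P}:=(\cdot,z)(z,z)^{-1}z$ and $\mathcal{Q}:=1-\mathcal{P}$. Let $\{e^{\overline{\mathcal{QL}}t}\}_{t\geq 0}$ denote the strongly continuous semigroup generated by $\overline{\mathcal{QL}}$. Then $\{\mathcal{G}(t):=\mathcal{P}+e^{\overline{\mathcal{QL}}t}\mathcal{Q}\}_{t\geq0}$ is a strongly continuous semigroup with generator $\overline{\mathcal{QL}}\mathcal{Q}$.
   Context: The scalar product $(\cdot,\cdot)$ on $H$ is conjugate-linear in its second argument. The generator is $\mathcal{L}x:=\lim_{h\searrow 0}\frac1h[\mathcal{U}(h)x-x]$ on the set $D(\mathcal{L})$ where the limit exists. $\dagger$ denotes the adjoint, the overbar the closure; $D(\overline{\mathcal{QL}}\mathcal{Q})=\{x\in H:\mathcal{Q}x\in D(\overline{\mathcal{QL}})\}$. The notation $\{e^{\mathcal{A}t}\}_{t\ge0}$ means the strongly continuous semigroup generated by $\mathcal{A}$. *)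

(* Defs.v *)
From Stdlib Require Import Reals.
From Coquelicot Require Export Coquelicot.
Open Scope R_scope.

Section Defs.
Variable H : CompleteNormedModule C_AbsRing.

(* inner product, linear in the first argument, conjugate-linear in the
   second, inducing the norm of H (so H is a complex Hilbert space) *)
Definition is_inner_product (ip : H -> H -> C) : Prop :=
  (forall x y w : H, ip (plus x y) w = Cplus (ip x w) (ip y w)) /\
  (forall (a : C) (x y : H), ip (scal a x) y = Cmult a (ip x y)) /\
  (forall x y : H, ip y x = Cconj (ip x y)) /\
  (forall x : H, norm x = sqrt (Re (ip x x))).

Record op := mkOp { dom : H -> Prop; app : H -> H }.

Definition bounded_linear (f : H -> H) : Prop :=
  (forall x y, f (plus x y) = plus (f x) (f y)) /\
  (forall (a : C) x, f (scal a x) = scal a (f x)) /\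
  (exists M : R, forall x, norm (f x) <= M * norm x).

Definition C0_semigroup (U : R -> H -> H) : Prop :=
  (forall t, 0 <= t -> bounded_linear (U t)) /\
  (forall x, U 0 x = x) /\
  (forall t s x, 0 <= t -> 0 <= s -> U (t + s) x = U t (U s x)) /\
  (forall x, filterlim (fun t => U t x) (at_right 0) (locally x)).

Definition diffq (U : R -> H -> H) (x : H) (h : R) : H :=
  scal (RtoC (/ h)) (minus (U h x) x).

Definition is_generator (U : R -> H -> H) (A : op) : Prop :=
  forall x, (dom A x <-> exists y, filterlim (diffq U x) (at_right 0) (locally y)) /\
            (dom A x -> filterlim (diffq U x) (at_right 0) (locally (app A x))).

Definition in_adj_dom (ip : H -> H -> C) (A : op) (z : H) : Prop :=
  exists w : H, forall x, dom A x -> ip (app A x) z = ip x w.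

Definition is_closure (A B : op) : Prop :=
  forall x y : H,
    (dom B x /\ app B x = y) <->
    (forall eps : R, 0 < eps ->
       exists a, dom A a /\ norm (minus a x) < eps /\ norm (minus (app A a) y) < eps).

Definition projP (ip : H -> H -> C) (z x : H) : H :=
  scal (Cdiv (ip x z) (ip z z)) z.
Definition projQ (ip : H -> H -> C) (z x : H) : H := minus x (projP ip z x).

Definition lcomp (F : H -> H) (A : op) : op := mkOp (dom A) (fun x => F (app A x)).
Definition rcomp (A : op) (F : H -> H) : op :=
  mkOp (fun x => dom A (F x)) (fun x => app A (F x)).
End Defs.

Arguments mkOp {H}. Arguments dom {H}. Arguments app {H}.

(* Main.v *)
Require Import Defs.
From Stdlib Require Import Reals Lra Lia Psatz Classical IndefiniteDescription.
From Coquelicot Require Import Coquelicot.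
Open Scope R_scope.
Set Keyed Unification.

Ltac cunf := unfold Cdiv, Cinv, Cmult, Cplus, Cconj, Copp, Cminus, RtoC, Re, Im in *; simpl in *.
Ltac ceq := cunf; apply injective_projections; simpl; try ring.

Section IP.
Context (H : CompleteNormedModule C_AbsRing) (ip : H -> H -> C) (Hip : is_inner_product H ip).

Lemma ip_plus_l x y w : ip (plus x y) w = Cplus (ip x w) (ip y w).
Proof. apply Hip. Qed.
Lemma ip_scal_l a x y : ip (scal a x) y = Cmult a (ip x y).
Proof. apply Hip. Qed.
Lemma ip_sym x y : ip y x = Cconj (ip x y).
Proof. apply Hip. Qed.
Lemma ip_norm x : norm x = sqrt (Re (ip x x)).
Proof. apply Hip. Qed.

Lemma ip_zero_l y : ip zero y = RtoC 0.
Proof.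
  rewrite <- (@scal_zero_l _ H y) at 1. rewrite ip_scal_l.
  change (@zero C_Ring) with (RtoC 0). destruct (ip y y). ceq.
Qed.
Lemma ip_zero_r y : ip y zero = RtoC 0.
Proof. rewrite ip_sym, ip_zero_l. ceq. Qed.

Lemma ip_plus_r x y w : ip w (plus x y) = Cplus (ip w x) (ip w y).
Proof. rewrite ip_sym, ip_plus_l, (ip_sym w x), (ip_sym w y).
  destruct (ip x w), (ip y w). ceq. Qed.
Lemma ip_scal_r a x y : ip y (scal a x) = Cmult (Cconj a) (ip y x).
Proof. rewrite ip_sym, ip_scal_l, (ip_sym y x). destruct a, (ip x y). ceq. Qed.
Lemma ip_opp_l x y : ip (opp x) y = Copp (ip x y).
Proof. transitivity (ip (scal (opp (one : C_AbsRing)) x) y). { f_equal. symmetry. exact (@scal_opp_one _ (CompleteNormedModule.ModuleSpace C_AbsRing H) x). }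
  rewrite ip_scal_l. destruct (ip x y). ceq. Qed.
Lemma ip_minus_l x y w : ip (minus x y) w = Cminus (ip x w) (ip y w).
Proof. unfold minus. rewrite ip_plus_l, ip_opp_l. destruct (ip x w), (ip y w). ceq. Qed.
Lemma ip_opp_r x y : ip y (opp x) = Copp (ip y x).
Proof. rewrite ip_sym, ip_opp_l, (ip_sym y x). destruct (ip x y). ceq. Qed.
Lemma ip_minus_r x y w : ip w (minus x y) = Cminus (ip w x) (ip w y).
Proof. unfold minus. rewrite ip_plus_r, ip_opp_r. destruct (ip w x), (ip w y). ceq. Qed.

Lemma ip_self x : ip x x = RtoC (norm x ^ 2).
Proof.
  assert (Him : Im (ip x x) = 0).
  { pose proof (ip_sym x x) as E. destruct (ip x x) as [a b]. cunf.
    injection E. lra. }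
  assert (Hre : 0 <= Re (ip x x)).
  { destruct (Rle_or_lt 0 (Re (ip x x))) as [h|h]; auto.
    exfalso. pose proof (ip_norm x) as E. rewrite sqrt_neg_0 in E; [|lra].
    apply norm_eq_zero in E. subst x. rewrite ip_zero_l in h. cunf. lra. }
  rewrite ip_norm. rewrite pow2_sqrt; auto.
  destruct (ip x x) as [a b]. cunf. subst b. reflexivity.
Qed.

Lemma norm_scalC (a : C) (x : H) : norm (scal a x) = Cmod a * norm x.
Proof.
  rewrite (ip_norm (scal a x)), ip_scal_l, ip_scal_r, ip_self.
  destruct a as [a1 a2]. unfold Cmod. simpl.
  match goal with |- sqrt ?A = sqrt ?B * _ =>
    replace A with (B * (norm x * norm x)) by ring end.
  rewrite sqrt_mult_alt.
  - rewrite sqrt_square; auto. apply norm_ge_0.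
  - nra.
Qed.

Lemma norm_scalR (r : R) (x : H) : norm (scal (RtoC r) x) = Rabs r * norm x.
Proof.
  rewrite norm_scalC. f_equal. unfold Cmod, RtoC. simpl.
  replace (r * (r * 1) + 0 * (0 * 1)) with (Rsqr r) by (unfold Rsqr; ring). apply sqrt_Rsqr_abs.
Qed.

Lemma CS x z : Cmod (ip x z) <= norm x * norm z.
Proof.
  destruct (Req_dec (norm z) 0) as [hz|hz].
  { apply norm_eq_zero in hz. subst z. rewrite ip_zero_r, norm_zero.
    unfold Cmod, RtoC; simpl. replace (0*(0*1)+0*(0*1)) with 0 by ring. rewrite sqrt_0. lra. }
  pose proof (norm_ge_0 z). pose proof (norm_ge_0 x).
  set (r := norm z ^ 2).
  assert (hr : 0 < r) by (unfold r; nra).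
  set (c := Cmult (ip x z) (RtoC (/ r))).
  assert (Hre : 0 <= Re (ip (minus x (scal c z)) (minus x (scal c z)))).
  { rewrite ip_self. unfold RtoC, Re; simpl. apply pow2_ge_0. }
  rewrite ?ip_minus_l, ?ip_minus_r, ?ip_scal_l, ?ip_scal_r, ?ip_self, (ip_sym x z) in Hre.
  fold r in Hre.
  unfold c in Hre. destruct (ip x z) as [p1 p2]. cunf.
  assert (Hle : p1 ^ 2 + p2 ^ 2 <= norm x ^ 2 * r).
  { apply Rmult_le_reg_r with (/ r). apply Rinv_0_lt_compat; lra.
    match type of Hre with 0 <= ?E => replace E with (norm x ^ 2 - (p1^2+p2^2) * / r) in Hre by (field; lra) end.
    replace (norm x ^ 2 * r * / r) with (norm x ^ 2) by (field; lra). lra. }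
  unfold Cmod; simpl. rewrite <- sqrt_pow2 with (x := norm x * norm z) by nra.
  apply sqrt_le_1_alt. unfold r in Hle. simpl in *. nra.
Qed.
End IP.

Ltac normzero := repeat match goal with |- context [@norm ?K ?V (@zero ?G)] =>
  replace (@norm K V (@zero G)) with 0 by (symmetry; exact (@norm_zero K V)) end.

Section Grp.
Context {G : AbelianGroup}.
Lemma g_plus_minus (a x : G) : plus a (minus x a) = x.
Proof. unfold minus. rewrite (plus_comm x (opp a)), plus_assoc, plus_opp_r, plus_zero_l. reflexivity. Qed.
Lemma g_minus_plus (a b : G) : minus (plus a b) a = b.
Proof. unfold minus. rewrite (plus_comm a b), <- plus_assoc, plus_opp_r, plus_zero_r. reflexivity. Qed.
Lemma g_minus_pp (a b c d : G) : minus (plus a b) (plus c d) = plus (minus a c) (minus b d).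
Proof. unfold minus. rewrite opp_plus. rewrite <- !plus_assoc. f_equal.
  rewrite !plus_assoc, (plus_comm b (opp c)). reflexivity. Qed.
Lemma g_minus_minus (a b c : G) : minus (minus a c) (minus b c) = minus a b.
Proof. unfold minus. rewrite opp_plus, opp_opp. rewrite <- !plus_assoc. f_equal.
  rewrite (plus_comm (opp b) c), plus_assoc, plus_opp_l, plus_zero_l. reflexivity. Qed.
Lemma g_minus_minus_l (a b : G) : minus (minus a b) a = opp b.
Proof. unfold minus. rewrite (plus_comm a (opp b)), <- plus_assoc, plus_opp_r, plus_zero_r. reflexivity. Qed.
Lemma g_chain (a b c : G) : plus (minus a b) (minus b c) = minus a c.
Proof. unfold minus. rewrite <- plus_assoc, (plus_assoc (opp b)), plus_opp_l, plus_zero_l. reflexivity. Qed.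
Lemma g_swap (w a c b : G) : plus w a = plus c b -> minus b w = minus a c.
Proof.
  intro E. assert (Eb : b = minus (plus w a) c) by (rewrite E; symmetry; apply g_minus_plus).
  rewrite Eb. unfold minus. rewrite (plus_comm (plus (plus w a) (opp c)) (opp w)).
  rewrite !plus_assoc, plus_opp_l, plus_zero_l. reflexivity.
Qed.
Lemma g_4 (a b c d : G) : minus (minus a c) (minus b d) = minus (minus a b) (minus c d).
Proof.
  unfold minus. rewrite !opp_plus, !opp_opp. rewrite <- !plus_assoc. f_equal.
  rewrite !plus_assoc, (plus_comm (opp c) (opp b)). reflexivity.
Qed.
Lemma g_pp (a b c d : G) : plus (plus a b) (plus c d) = plus (plus a c) (plus b d).
Proof. rewrite <- !plus_assoc. f_equal. rewrite !plus_assoc, (plus_comm b c). reflexivity. Qed.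
Lemma g_mpp (a b c : G) : minus (plus a b) (plus a c) = minus b c.
Proof. rewrite g_minus_pp, minus_eq_zero, plus_zero_l. reflexivity. Qed.
End Grp.

Section Proj.
Context (H : CompleteNormedModule C_AbsRing) (ip : H -> H -> C) (Hip : is_inner_product H ip).
Context (z : H) (Hz0 : z <> zero).

Local Notation HG := (CompleteNormedModule.AbelianGroup C_AbsRing H).
Local Notation HM := (CompleteNormedModule.ModuleSpace C_AbsRing H).
Let P := projP H ip z.
Let Q := projQ H ip z.

Lemma nz_pos : 0 < norm z.
Proof. destruct (norm_ge_0 z) as [h|h]; auto. exfalso. apply Hz0. apply (@norm_eq_zero _ H). auto. Qed.

Lemma ip_P x : ip (P x) z = ip x z.
Proof.
  unfold P, projP. rewrite (ip_scal_l H ip Hip), (ip_self H ip Hip).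
  pose proof nz_pos. destruct (ip x z) as [a b]. ceq; field; nra.
Qed.

Lemma ip_Q x : ip (Q x) z = RtoC 0.
Proof.
  unfold Q, projQ. rewrite (ip_minus_l H ip Hip). fold P. rewrite ip_P. destruct (ip x z). ceq.
Qed.

Lemma P_ext x y : ip x z = ip y z -> P x = P y.
Proof. intro E. unfold P, projP. rewrite E. reflexivity. Qed.

Lemma P_zero_of x : ip x z = RtoC 0 -> P x = zero.
Proof.
  intro E. unfold P, projP. rewrite E.
  transitivity (scal (zero : C_AbsRing) z).
  { f_equal. destruct (ip z z) as [a b]. apply injective_projections; simpl; cunf; simpl; ring. }
  exact (@scal_zero_l _ (CompleteNormedModule.ModuleSpace C_AbsRing H) z).
Qed.

Lemma P_P x : P (P x) = P x.
Proof. apply P_ext. apply ip_P. Qed.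
Lemma P_Q x : P (Q x) = zero.
Proof. apply P_zero_of. apply ip_Q. Qed.
Lemma PQ_sum x : plus (P x) (Q x) = x.
Proof. unfold Q, projQ. fold P. apply (@g_plus_minus HG). Qed.
Lemma Q_P x : Q (P x) = zero.
Proof. unfold Q, projQ. fold P. rewrite P_P. apply (@minus_eq_zero HG). Qed.
Lemma Q_of_ip0 y : ip y z = RtoC 0 -> Q y = y.
Proof. intro E. unfold Q, projQ. fold P. rewrite (P_zero_of y E). apply (@minus_zero_r HG). Qed.
Lemma Q_Q x : Q (Q x) = Q x.
Proof. apply Q_of_ip0. apply ip_Q. Qed.

Lemma P_plus x y : P (plus x y) = plus (P x) (P y).
Proof.
  unfold P, projP. rewrite (ip_plus_l H ip Hip).
  transitivity (scal (plus (Cdiv (ip x z) (ip z z)) (Cdiv (ip y z) (ip z z)) : C_AbsRing) z).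
  { f_equal. destruct (ip x z), (ip y z), (ip z z). apply injective_projections; cunf; simpl; ring. }
  exact (@scal_distr_r _ (CompleteNormedModule.ModuleSpace C_AbsRing H) _ _ z).
Qed.
Lemma P_scal (a : C) x : P (scal a x) = scal a (P x).
Proof.
  unfold P, projP. rewrite (ip_scal_l H ip Hip).
  transitivity (scal (mult a (Cdiv (ip x z) (ip z z)) : C_AbsRing) z).
  { f_equal. destruct a, (ip x z), (ip z z). apply injective_projections; cunf; simpl; ring. }
  symmetry. exact (@scal_assoc _ (CompleteNormedModule.ModuleSpace C_AbsRing H) _ _ z).
Qed.
Lemma Q_plus x y : Q (plus x y) = plus (Q x) (Q y).
Proof. unfold Q, projQ. fold P. rewrite P_plus. apply (@g_minus_pp HG). Qed.
Lemma Q_scal (a : C) x : Q (scal a x) = scal a (Q x).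
Proof. unfold Q, projQ. fold P. rewrite P_scal. symmetry.
  exact (@scal_minus_distr_l _ (CompleteNormedModule.ModuleSpace C_AbsRing H) _ _ _). Qed.

Lemma normP x : norm (P x) <= norm x.
Proof.
  unfold P, projP. rewrite (norm_scalC H ip Hip), (ip_self H ip Hip).
  pose proof (CS H ip Hip x z) as Hc. pose proof nz_pos. pose proof (norm_ge_0 x).
  replace (Cmod (Cdiv (ip x z) (RtoC (norm z ^ 2)))) with (Cmod (ip x z) / norm z ^ 2).
  - apply Rmult_le_reg_r with (norm z ^ 2 / norm z). { apply Rdiv_lt_0_compat; nra. }
    replace (Cmod (ip x z) / norm z ^ 2 * norm z * (norm z ^ 2 / norm z)) with (Cmod (ip x z)) by (field; lra).
    replace (norm x * (norm z ^ 2 / norm z)) with (norm x * norm z) by (field; lra). lra.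
  - rewrite Cmod_div.
    + rewrite Cmod_R, Rabs_right; auto. apply Rle_ge, pow2_ge_0.
    + intro E. apply (f_equal fst) in E. simpl in E. nra.
Qed.

Lemma normQ x : norm (Q x) <= 2 * norm x.
Proof.
  unfold Q, projQ. fold P. unfold minus.
  eapply Rle_trans. apply (@norm_triangle _ (CompleteNormedModule.NormedModule C_AbsRing H)).
  rewrite (@norm_opp _ (CompleteNormedModule.NormedModule C_AbsRing H)). pose proof (normP x). lra.
Qed.

End Proj.

Section HRdef.
Context (H : CompleteNormedModule C_AbsRing).
Local Notation HG := (CompleteNormedModule.AbelianGroup C_AbsRing H).
Local Notation HM := (CompleteNormedModule.ModuleSpace C_AbsRing H).
Local Notation HN := (CompleteNormedModule.NormedModule C_AbsRing H).

Definition HR_ms_mixin : ModuleSpace.mixin_of R_Ring HG.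
Proof.
  refine (ModuleSpace.Mixin R_Ring HG (fun (r : R) (x : HG) => @scal _ HM (RtoC r) x) _ _ _ _).
  - intros a b w. simpl. rewrite (@scal_assoc _ HM). f_equal. unfold mult, plus, one, zero; simpl. apply injective_projections; simpl; unfold Cmult, RtoC; simpl; ring.
  - intros w. simpl. exact (@scal_one _ HM w).
  - intros a w1 w2. simpl. exact (@scal_distr_l _ HM _ w1 w2).
  - intros a b w. simpl.
    transitivity (@scal _ HM (plus (RtoC a) (RtoC b)) w). { f_equal. unfold mult, plus, one, zero; simpl. apply injective_projections; simpl; unfold Cplus, RtoC; simpl; ring. }
    exact (@scal_distr_r _ HM _ _ w).
Defined.

Definition HR_ms_class : ModuleSpace.class_of R_Ring H :=
  ModuleSpace.Class R_Ring H (AbelianGroup.class HG) HR_ms_mixin.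

Definition HR_aux_class : NormedModuleAux.class_of R_AbsRing H :=
  NormedModuleAux.Class R_AbsRing H HR_ms_class (UniformSpace.class (CompleteNormedModule.UniformSpace C_AbsRing H)).

Definition HR_aux : NormedModuleAux R_AbsRing := NormedModuleAux.Pack R_AbsRing H HR_aux_class H.

Definition HR_nm_mixin : NormedModule.mixin_of R_AbsRing HR_aux.
Proof.
  refine (NormedModule.Mixin R_AbsRing HR_aux (@norm _ HN) (@norm_factor _ HN) _ _ _ _ _).
  - intros x y. exact (@norm_triangle _ HN x y).
  - intros l x. simpl. eapply Rle_trans. apply (@norm_scal _ HN).
    right. f_equal. unfold abs; simpl. unfold Cmod, RtoC; simpl.
    replace (l * (l * 1) + 0 * (0 * 1)) with (Rsqr l) by (unfold Rsqr; ring). apply sqrt_Rsqr_abs.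
  - intros x y eps. exact (@norm_compat1 _ HN x y eps).
  - intros x y eps. exact (@norm_compat2 _ HN x y eps).
  - intros x. exact (@norm_eq_zero _ HN x).
Defined.

Definition HR_nm_class : NormedModule.class_of R_AbsRing H :=
  NormedModule.Class R_AbsRing H HR_aux_class HR_nm_mixin.

Definition HR_class : CompleteNormedModule.class_of R_AbsRing H :=
  CompleteNormedModule.Class R_AbsRing H HR_nm_class
    (CompleteSpace.mixin _ (CompleteSpace.class (CompleteNormedModule.CompleteSpace C_AbsRing H))).

Definition HR : CompleteNormedModule R_AbsRing := CompleteNormedModule.Pack R_AbsRing H HR_class H.

Lemma HR_scal (r : R) (x : HR) : @scal _ (CompleteNormedModule.ModuleSpace R_AbsRing HR) r x = @scal _ HM (RtoC r) x.
Proof. reflexivity. Qed.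
Lemma HR_plus (x y : HR) : @plus (CompleteNormedModule.AbelianMonoid R_AbsRing HR) x y = @plus HG x y.
Proof. reflexivity. Qed.
Lemma HR_norm (x : HR) : @norm _ (CompleteNormedModule.NormedModule R_AbsRing HR) x = @norm _ HN x.
Proof. reflexivity. Qed.
End HRdef.

Lemma R_ball (c d h : R) : Rabs (h - c) < d -> ball c d h.
Proof. intro Hl. unfold ball; simpl. unfold AbsRing_ball, abs, minus, plus, opp; simpl. exact Hl. Qed.

Section Semi.
Context (H : CompleteNormedModule C_AbsRing).
Local Notation HG := (CompleteNormedModule.AbelianGroup C_AbsRing H).
Local Notation HM := (CompleteNormedModule.ModuleSpace C_AbsRing H).
Local Notation HN := (CompleteNormedModule.NormedModule C_AbsRing H).
Context (T : R -> H -> H) (HT : C0_semigroup H T).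

Lemma T_plus t x y : 0 <= t -> T t (plus x y) = plus (T t x) (T t y).
Proof. intro ht. apply (proj1 HT t ht). Qed.
Lemma T_scal t (a : C) x : 0 <= t -> T t (scal a x) = scal a (T t x).
Proof. intro ht. apply (proj1 HT t ht). Qed.
Lemma T_bnd t : 0 <= t -> exists M, forall x, norm (T t x) <= M * norm x.
Proof. intro ht. apply (proj1 HT t ht). Qed.
Lemma T_0 x : T 0 x = x.
Proof. apply HT. Qed.
Lemma T_sg t s x : 0 <= t -> 0 <= s -> T (t + s) x = T t (T s x).
Proof. intros; apply HT; auto. Qed.
Lemma T_zero t : 0 <= t -> T t zero = zero.
Proof.
  intro ht. transitivity (T t (@scal _ HM (zero : C_AbsRing) zero)).
  { f_equal. symmetry. exact (@scal_zero_l _ HM zero). }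
  rewrite T_scal; auto. exact (@scal_zero_l _ HM _).
Qed.
Lemma T_opp t x : 0 <= t -> T t (opp x) = opp (T t x).
Proof.
  intro ht. apply (@plus_reg_l HG (T t x)).
  rewrite <- T_plus; auto. rewrite !(@plus_opp_r HG). apply T_zero; auto.
Qed.
Lemma T_minus t x y : 0 <= t -> T t (minus x y) = minus (T t x) (T t y).
Proof. intro ht. unfold minus. rewrite T_plus, T_opp; auto. Qed.

Lemma T_right x eps : 0 < eps -> exists eta, 0 < eta /\
  forall h, 0 <= h < eta -> norm (minus (T h x) x) < eps.
Proof.
  intro he. destruct HT as (_ & _ & _ & Hc).
  pose proof (proj1 (@filterlim_locally_ball_norm _ _ HN _ _ (fun t => T t x) x) (Hc x) (mkposreal eps he)) as Hd.
  destruct Hd as [d Hd]. exists d. split. apply cond_pos.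
  intros h [h0 h1]. destruct h0 as [h0|h0].
  - apply Hd; auto. apply R_ball. rewrite Rminus_0_r, Rabs_right; lra.
  - subst h. rewrite T_0, (@minus_eq_zero HG), (@norm_zero _ HN). exact he.
Qed.
End Semi.

Section UBP.
Context (H : CompleteNormedModule C_AbsRing) (ip : H -> H -> C) (Hip : is_inner_product H ip).
Local Notation HG := (CompleteNormedModule.AbelianGroup C_AbsRing H).
Local Notation HM := (CompleteNormedModule.ModuleSpace C_AbsRing H).
Local Notation HN := (CompleteNormedModule.NormedModule C_AbsRing H).
Local Notation HC := (CompleteNormedModule.CompleteSpace C_AbsRing H).

Lemma BL_zero S : bounded_linear H S -> S zero = zero.
Proof.
  intro HS. transitivity (S (@scal _ HM (zero : C_AbsRing) zero)).
  { f_equal. symmetry. exact (@scal_zero_l _ HM zero). }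
  rewrite (proj1 (proj2 HS)). exact (@scal_zero_l _ HM _).
Qed.
Lemma BL_plus S x y : bounded_linear H S -> S (plus x y) = plus (S x) (S y).
Proof. intro HS. apply HS. Qed.
Lemma BL_scal S (a : C) x : bounded_linear H S -> S (scal a x) = scal a (S x).
Proof. intro HS. apply HS. Qed.
Lemma BL_opp S x : bounded_linear H S -> S (opp x) = opp (S x).
Proof.
  intro HS. apply (@plus_reg_l HG (S x)).
  rewrite <- BL_plus; auto. rewrite !(@plus_opp_r HG). apply BL_zero; auto.
Qed.
Lemma BL_minus S x y : bounded_linear H S -> S (minus x y) = minus (S x) (S y).
Proof. intro HS. unfold minus. rewrite BL_plus, BL_opp; auto. Qed.

Lemma norm_minus_le (a b : H) : norm (minus a b) <= norm a + norm b.
Proof. unfold minus. eapply Rle_trans. apply (@norm_triangle _ HN). rewrite (@norm_opp _ HN). lra. Qed.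
Lemma norm_minus_sym (a b : H) : norm (minus a b) = norm (minus b a).
Proof. rewrite <- (@opp_minus HG b a). apply (@norm_opp _ HN). Qed.
Lemma norm_chain (a b c : H) : norm (minus a c) <= norm (minus a b) + norm (minus b c).
Proof.
  replace (minus a c) with (plus (minus a b) (minus b c)).
  apply (@norm_triangle _ HN).
  unfold minus. rewrite <- (@plus_assoc HG), (@plus_assoc HG (opp b)), (@plus_opp_l HG), (@plus_zero_l HG). reflexivity.
Qed.

Lemma opnorm_sig S (HS : bounded_linear H S) : {N : R | 0 <= N /\ (forall u, norm (S u) <= N * norm u) /\
   (forall eps, 0 < eps -> exists u, norm u <= 1 /\ N - eps < norm (S u))}.
Proof.
  set (E := fun r => exists u : H, norm u <= 1 /\ r = norm (S u)).
  assert (Hb : bound E).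
  { destruct HS as (_ & _ & M & HM'). exists (Rmax M 0). intros r [u [hu ->]].
    eapply Rle_trans. apply HM'. pose proof (Rmax_l M 0). pose proof (Rmax_r M 0).
    pose proof (norm_ge_0 u). nra. }
  assert (Hne : exists r, E r). { exists (norm (S zero)). exists zero. split; auto. rewrite (@norm_zero _ HN). lra. }
  destruct (completeness E Hb Hne) as [N [Hub Hlub]].
  exists N. split; [|split].
  - eapply Rle_trans. apply (@norm_ge_0 _ HN). apply Hub. exists zero. split; auto. rewrite (@norm_zero _ HN). lra.
  - intros u. destruct (Req_dec (norm u) 0) as [h0|h0].
    + apply (@norm_eq_zero _ HN) in h0. subst u. rewrite BL_zero; auto. normzero. lra.
    + pose proof (norm_ge_0 u).
      assert (Hv : norm (S (scal (RtoC (/ norm u)) u)) <= N).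
      { apply Hub. eexists. split; [|reflexivity]. rewrite (norm_scalR H ip Hip).
        rewrite Rabs_right. right. field. auto. apply Rle_ge. apply Rlt_le, Rinv_0_lt_compat. lra. }
      rewrite BL_scal, (norm_scalR H ip Hip) in Hv; auto.
      rewrite Rabs_right in Hv. 2:{ apply Rle_ge. apply Rlt_le, Rinv_0_lt_compat. lra. }
      apply Rmult_le_reg_l with (/ norm u). apply Rinv_0_lt_compat; lra.
      replace (/ norm u * (N * norm u)) with N by (field; auto). auto.
  - intros eps he. apply NNPP. intro Hno.
    assert (N <= N - eps); [|lra].
    apply Hlub. intros r [u [hu ->]]. apply Rnot_lt_le. intro Hl. apply Hno. exists u. auto.
Qed.

Lemma plus_self (b : H) : plus b b = scal (RtoC 2) b.
Proof.
  transitivity (@scal _ HM (plus (one : C_AbsRing) one) b).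
  2:{ f_equal. apply injective_projections; unfold plus, one; simpl; unfold RtoC; simpl; ring. }
  rewrite (@scal_distr_r _ HM), (@scal_one _ HM). reflexivity.
Qed.

Lemma sokal_step S (HS : bounded_linear H S) N
  (HN1 : 0 <= N) (HN2 : forall u, norm (S u) <= N * norm u)
  (HN3 : forall eps, 0 < eps -> exists u, norm u <= 1 /\ N - eps < norm (S u))
  x r : 0 < r -> exists x', norm (minus x' x) <= r /\ 2/3 * r * N <= norm (S x').
Proof.
  intro hr. destruct (Req_dec N 0) as [hN|hN].
  { exists x. rewrite (@minus_eq_zero HG), (@norm_zero _ HN). split. lra. subst N. rewrite Rmult_0_r. apply (@norm_ge_0 _ HN). }
  destruct (HN3 (N/3)) as [u [hu hSu]]. lra.
  set (v := scal (RtoC r) u).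
  assert (Hv : norm v <= r). { unfold v. rewrite (norm_scalR H ip Hip), Rabs_right by lra. pose proof (norm_ge_0 u). nra. }
  assert (HSv : 2/3 * r * N < norm (S v)).
  { unfold v. rewrite BL_scal by auto. rewrite (norm_scalR H ip Hip), Rabs_right by lra. nra. }
  destruct (Rle_lt_dec (norm (S v)) (norm (S (plus x v)))) as [h|h].
  - exists (plus x v). split. rewrite (@g_minus_plus HG). auto. lra.
  - exists (minus x v). split.
    + rewrite (@g_minus_minus_l HG), (@norm_opp _ HN). auto.
    + assert (E : minus (S (plus x v)) (S (minus x v)) = scal (RtoC 2) (S v)).
      { rewrite BL_plus, BL_minus, <- plus_self; auto.
        unfold minus. rewrite (@opp_plus HG), (@opp_opp HG).
        rewrite <- (@plus_assoc HG), (@plus_comm HG (S v)), <- (@plus_assoc HG), (@plus_assoc HG (S x)), (@plus_opp_r HG), (@plus_zero_l HG).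
        apply (@plus_comm HG). }
      pose proof (norm_minus_le (S (plus x v)) (S (minus x v))) as Ht.
      rewrite E, (norm_scalR H ip Hip), Rabs_right in Ht by lra. lra.
Qed.
End UBP.

Lemma bernoulli43 (j : nat) : 1 + INR j / 3 <= (4/3) ^ j.
Proof.
  induction j. simpl. lra.
  rewrite S_INR. simpl. pose proof (pos_INR j).
  assert (0 <= (4/3)^j) by (apply pow_le; lra). nra.
Qed.

Lemma fin_bound (f : nat -> R) (N : nat) : exists B, forall n, (n < N)%nat -> f n <= B.
Proof.
  induction N. exists 0. intros n Hn. lia.
  destruct IHN as [B HB]. exists (Rmax B (f N)). intros n Hn.
  destruct (Nat.eq_dec n N). subst. apply Rmax_r.
  eapply Rle_trans. apply HB. lia. apply Rmax_l.
Qed.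

Section UBP2.
Context (H : CompleteNormedModule C_AbsRing) (ip : H -> H -> C) (Hip : is_inner_product H ip).
Local Notation HG := (CompleteNormedModule.AbelianGroup C_AbsRing H).
Local Notation HM := (CompleteNormedModule.ModuleSpace C_AbsRing H).
Local Notation HN := (CompleteNormedModule.NormedModule C_AbsRing H).
Local Notation HC := (CompleteNormedModule.CompleteSpace C_AbsRing H).

Lemma ubp (Sq : nat -> H -> H) (HS : forall n, bounded_linear H (Sq n))
  (Hpt : forall x, exists B, forall n, norm (Sq n x) <= B) :
  exists M, forall n u, norm (Sq n u) <= M * norm u.
Proof.
  apply NNPP. intro Hno.
  pose (N n := proj1_sig (opnorm_sig H ip Hip (Sq n) (HS n))).
  assert (HNp : forall n, 0 <= N n /\ (forall u, norm (Sq n u) <= N n * norm u) /\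
   (forall eps, 0 < eps -> exists u, norm u <= 1 /\ N n - eps < norm (Sq n u))).
  { intro n. exact (proj2_sig (opnorm_sig H ip Hip (Sq n) (HS n))). }
  assert (Hbig : forall K, exists n, K < N n).
  { intro K. apply NNPP. intro Hc. apply Hno. exists K. intros n u.
    apply Rnot_lt_le. intro Hl. apply Hc. exists n.
    destruct (HNp n) as (_ & H2 & _). specialize (H2 u). pose proof (norm_ge_0 u).
    destruct (Rle_lt_dec (N n) K) as [h|h]; auto. exfalso. nra. }
  assert (Hstep : forall (k : nat) (x : H), exists p : nat * H,
     norm (minus (snd p) x) <= (1/3) ^ (S k) /\ 4 ^ (S k) <= N (fst p) /\
     2/3 * (1/3) ^ (S k) * N (fst p) <= norm (Sq (fst p) (snd p))).
  { intros k x. destruct (Hbig (4 ^ (S k))) as [n hn].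
    destruct (HNp n) as (H1 & H2 & H3).
    destruct (sokal_step H ip Hip (Sq n) (HS n) (N n) H1 H2 H3 x ((1/3)^(S k))) as [x' [h1 h2]].
    { apply pow_lt. lra. }
    exists (n, x'). split; [exact h1|split; [left; exact hn|exact h2]]. }
  pose (step k x := proj1_sig (constructive_indefinite_description _ (Hstep k x))).
  pose (xs := fix xs (k : nat) : nat * H := match k with O => (O, zero) | S k' => step k' (snd (xs k')) end).
  pose (x k := snd (xs k)). pose (nn k := fst (xs k)).
  assert (Hx : forall k, norm (minus (x (S k)) (x k)) <= (1/3) ^ (S k) /\ 4 ^ (S k) <= N (nn (S k)) /\
     2/3 * (1/3) ^ (S k) * N (nn (S k)) <= norm (Sq (nn (S k)) (x (S k)))).
  { intro k. exact (proj2_sig (constructive_indefinite_description _ (Hstep k (snd (xs k))))). }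
  assert (Hcau : forall k d, norm (minus (x (k + d)%nat) (x k)) <= 1/2 * (1/3)^k * (1 - (1/3)^d)).
  { intros k d. induction d.
    - rewrite Nat.add_0_r, (@minus_eq_zero HG). normzero. simpl. lra.
    - rewrite Nat.add_succ_r. eapply Rle_trans. apply (norm_chain H _ (x (k + d)%nat)).
      destruct (Hx (k + d)%nat) as [h1 _]. rewrite <- Nat.add_succ_r, pow_add, Nat.add_succ_r in h1.
      replace ((1/3)^(S d)) with (1/3 * (1/3)^d) in * by (simpl; ring). nra. }
  assert (Hcau' : forall k m, (k <= m)%nat -> norm (minus (x m) (x k)) <= 1/2 * (1/3)^k).
  { intros k m hkm. replace m with (k + (m - k))%nat by lia. eapply Rle_trans. apply Hcau.
    assert (0 < (1/3)^(m-k)) by (apply pow_lt; lra). assert (0 < (1/3)^k) by (apply pow_lt; lra). nra. }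
  pose (F := filtermap x eventually).
  assert (FF : ProperFilter F) by (apply filtermap_proper_filter, eventually_filter).
  assert (Fc : cauchy (T := HC) F).
  { intros eps. destruct (pow_lt_1_zero (1/3)) with (y := pos eps) as [K HK].
    { rewrite Rabs_right; lra. } { apply cond_pos. }
    exists (x K). exists K. intros m hm. apply (@norm_compat1 _ HN).
    eapply Rle_lt_trans. apply Hcau'. lia. specialize (HK K (le_n K)).
    rewrite Rabs_right in HK. assert (0 < (1/3)^K) by (apply pow_lt; lra). lra.
    apply Rle_ge, pow_le. lra. }
  pose (X := lim (T := HC) F).
  assert (HX : forall k, norm (minus X (x k)) <= 1/2 * (1/3)^k).
  { intro k. apply Rle_plus_epsilon. intros e he.
    pose proof (@norm_factor_gt_0 _ HN) as hnf.
    destruct (complete_cauchy (T := HC) F FF Fc (mkposreal (e / (@norm_factor _ HN)) (Rdiv_lt_0_compat _ _ he hnf))) as [K HK].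
    specialize (HK (max K k) (Nat.le_max_l _ _)).
    apply (@norm_compat2 _ HN) in HK. simpl in HK.
    replace (@norm_factor _ HN * (e / @norm_factor _ HN)) with e in HK by (field; lra).
    eapply Rle_trans. apply (norm_chain H _ (x (max K k))).
    rewrite norm_minus_sym. pose proof (Hcau' k (max K k) (Nat.le_max_r _ _)) as H0. unfold X.
    apply Rle_trans with (e + 1/2*(1/3)^k); [apply Rplus_le_compat; [left; exact HK | exact H0] | lra]. }
  destruct (Hpt X) as [B HB].
  destruct (INR_unbounded (18 * Rabs B)) as [j hj].
  destruct (Hx j) as (h1 & h2 & h3).
  destruct (HNp (nn (S j))) as (_ & H2 & _).
  set (m := nn (S j)) in *. set (a := Sq m (x (S j))) in *. set (b := Sq m X).
  set (r := (1/3)^(S j)) in *.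
  assert (H0 : 0 <= N m) by apply HNp.
  assert (h4 : norm (minus a b) <= N m * norm (minus (x (S j)) X)).
  { unfold a, b. rewrite <- BL_minus by auto. apply H2. }
  assert (h7 : norm (minus (x (S j)) X) <= 1/2 * r).
  { rewrite norm_minus_sym. apply HX. }
  assert (hA : norm (minus a b) <= N m * (1/2 * r)).
  { eapply Rle_trans. exact h4. apply Rmult_le_compat_l. exact H0. exact h7. }
  assert (h5 : norm a <= norm (minus a b) + norm b).
  { pose proof (@norm_triangle _ HN (minus a b) b) as h5. rewrite (@plus_comm HG), (@g_plus_minus HG) in h5. exact h5. }
  assert (h6 : norm b <= B) by apply HB.
  assert (h3' : 2/3 * r * N m <= norm a) by exact h3.
  assert (h8 : 1/6 * r * N m <= B) by lra.
  unfold r in h8.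
  assert (h9 : (1/3)^(S j) * 4^(S j) = (4/3)^(S j)).
  { rewrite <- Rpow_mult_distr. f_equal. lra. }
  pose proof (bernoulli43 (S j)). rewrite S_INR in *. pose proof (pos_INR j).
  assert (0 < (1/3)^(S j)) by (apply pow_lt; lra).
  assert (1/6 * (4/3)^(S j) <= B) by nra.
  pose proof (Rle_abs B). lra.
Qed.
End UBP2.

Section LocB.
Context (H : CompleteNormedModule C_AbsRing) (ip : H -> H -> C) (Hip : is_inner_product H ip).
Local Notation HG := (CompleteNormedModule.AbelianGroup C_AbsRing H).
Local Notation HM := (CompleteNormedModule.ModuleSpace C_AbsRing H).
Local Notation HN := (CompleteNormedModule.NormedModule C_AbsRing H).
Context (T : R -> H -> H) (HT : C0_semigroup H T).

Lemma T_locbound : exists delta, 0 < delta /\ exists M, 0 <= M /\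
  forall t, 0 <= t <= delta -> forall u, norm (T t u) <= M * norm u.
Proof.
  apply NNPP. intro Hno.
  assert (Hn : forall n : nat, exists t, (0 <= t <= / (INR n + 1)) /\ exists u, INR n * norm u < norm (T t u)).
  { intro n. apply NNPP. intro Hc. apply Hno. exists (/ (INR n + 1)). split.
    { apply Rinv_0_lt_compat. pose proof (pos_INR n). lra. }
    exists (INR n). split. apply pos_INR. intros t ht u.
    apply Rnot_lt_le. intro Hl. apply Hc. exists t. split; auto. exists u; auto. }
  pose (tn n := proj1_sig (constructive_indefinite_description _ (Hn n))).
  assert (Htn : forall n, (0 <= tn n <= / (INR n + 1)) /\ exists u, INR n * norm u < norm (T (tn n) u)).
  { intro n. exact (proj2_sig (constructive_indefinite_description _ (Hn n))). }
  destruct (ubp H ip Hip (fun n => T (tn n))) as [M HM'].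
  - intro n. apply (proj1 HT). apply Htn.
  - intro x. destruct (T_right H T HT x 1) as [eta [heta Heta]]. lra.
    destruct (INR_unbounded (/ eta)) as [N0 hN0].
    destruct (fin_bound (fun n => norm (T (tn n) x)) N0) as [B HB].
    exists (Rmax B (norm x + 1)). intro n.
    destruct (Nat.lt_ge_cases n N0) as [h|h].
    + eapply Rle_trans. apply (HB n h). apply Rmax_l.
    + eapply Rle_trans. 2: apply Rmax_r.
      assert (Hlt : 0 <= tn n < eta).
      { destruct (Htn n) as [[h1 h2] _]. split; auto.
        eapply Rle_lt_trans. exact h2.
        assert (INR N0 <= INR n) by (apply le_INR; lia).
        pose proof (pos_INR N0).
        apply Rlt_le_trans with (/ INR N0).
        - apply Rinv_lt_contravar. assert (0 < INR N0). { assert (0 < / eta) by (apply Rinv_0_lt_compat; lra). lra. } nra. lra.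
        - rewrite <- (Rinv_inv eta). apply Rinv_le_contravar. apply Rinv_0_lt_compat; lra. lra. }
      specialize (Heta (tn n) Hlt).
      pose proof (@norm_triangle _ HN (minus (T (tn n) x) x) x) as Ht.
      rewrite (@plus_comm HG), (@g_plus_minus HG) in Ht. lra.
  - destruct (INR_unbounded M) as [n hn].
    destruct (Htn n) as [_ [u hu]]. specialize (HM' n u). simpl in HM'.
    pose proof (norm_ge_0 u). nra.
Qed.

End LocB.

Section IntBL.
Context (H : CompleteNormedModule C_AbsRing) (ip : H -> H -> C) (Hip : is_inner_product H ip).
Local Notation HG := (CompleteNormedModule.AbelianGroup C_AbsRing H).
Local Notation HM := (CompleteNormedModule.ModuleSpace C_AbsRing H).
Local Notation HN := (CompleteNormedModule.NormedModule C_AbsRing H).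
Local Notation HRN := (CompleteNormedModule.NormedModule R_AbsRing (HR H)).

Lemma BL_cont (S : H -> H) (HS : bounded_linear H S) (l : H) :
  filterlim S (locally l) (locally (S l)).
Proof.
  pose proof HS as (H1 & H2 & M & HM').
  apply (proj2 (@filterlim_locally_ball_norm _ _ HN _ _ S (S l))). intros eps.
  set (M' := Rmax M 1).
  assert (hM' : 0 < M') by (unfold M'; pose proof (Rmax_r M 1); lra).
  eapply filter_imp. 2: apply (@locally_ball_norm _ HN l (mkposreal (eps / M') (Rdiv_lt_0_compat _ _ (cond_pos eps) hM'))).
  intros x Hx. unfold ball_norm in *. simpl in Hx.
  assert (Hl : S (minus x l) = minus (S x) (S l)) by (apply (BL_minus H); auto).
  rewrite <- Hl. eapply Rle_lt_trans. apply HM'.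
  pose proof (norm_ge_0 (minus x l)). pose proof (Rmax_l M 1).
  apply Rle_lt_trans with (M' * norm (minus x l)). apply Rmult_le_compat_r; auto.
  replace (pos eps) with (M' * (eps / M')) by (field; lra).
  apply Rmult_lt_compat_l; auto.
Qed.

Lemma Riemann_sum_BL (S : H -> H) (HS : bounded_linear H S) (g : R -> HR H) ptd :
  Riemann_sum (V := CompleteNormedModule.ModuleSpace R_AbsRing (HR H)) (fun r => S (g r)) ptd =
  S (Riemann_sum (V := CompleteNormedModule.ModuleSpace R_AbsRing (HR H)) g ptd).
Proof.
  induction ptd using SF_cons_ind.
  - symmetry. apply (BL_zero H). auto.
  - rewrite !Riemann_sum_cons. rewrite IHptd.
    transitivity (S (@plus HG (@scal _ HM (RtoC (SF_h ptd - fst h)) (g (snd h))) (Riemann_sum g ptd))).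
    2: reflexivity.
    rewrite (BL_plus H), (BL_scal H); auto.
Qed.

Lemma is_RInt_BL (S : H -> H) (HS : bounded_linear H S) (g : R -> HR H) a b (l : HR H) :
  is_RInt g a b l -> is_RInt (V := HRN) (fun r => S (g r)) a b (S l).
Proof.
  unfold is_RInt. intro Hg.
  eapply filterlim_ext.
  2: eapply filterlim_comp; [exact Hg | apply (BL_cont S HS l)].
  intro ptd. simpl. rewrite Riemann_sum_BL; auto.
  transitivity (S (@scal _ HM (RtoC (sign (b - a))) (@Riemann_sum HRN g ptd))). { reflexivity. }
  transitivity (@scal _ HM (RtoC (sign (b - a))) (S (@Riemann_sum HRN g ptd))). { apply (BL_scal H); auto. }
  reflexivity.
Qed.
End IntBL.

Lemma R_ball_inv (c d h : R) : ball c d h -> Rabs (h - c) < d.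
Proof. intro Hl. unfold ball in Hl; simpl in Hl. unfold AbsRing_ball, abs, minus, plus, opp in Hl; simpl in Hl. exact Hl. Qed.

Lemma Rmax_lip s r : Rabs (Rmax 0 s - Rmax 0 r) <= Rabs (s - r).
Proof. unfold Rmax. destruct (Rle_dec 0 s), (Rle_dec 0 r); unfold Rabs; repeat destruct Rcase_abs; lra. Qed.

Section Orbit.
Context (H : CompleteNormedModule C_AbsRing) (ip : H -> H -> C) (Hip : is_inner_product H ip).
Local Notation HG := (CompleteNormedModule.AbelianGroup C_AbsRing H).
Local Notation HM := (CompleteNormedModule.ModuleSpace C_AbsRing H).
Local Notation HN := (CompleteNormedModule.NormedModule C_AbsRing H).
Local Notation HRN := (CompleteNormedModule.NormedModule R_AbsRing (HR H)).
Context (T : R -> H -> H) (HT : C0_semigroup H T).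
Context (delta M : R) (hd : 0 < delta) (hM : 0 <= M)
  (Hb : forall t, 0 <= t <= delta -> forall u, norm (T t u) <= M * norm u).

Lemma orbit_core y eps : 0 < eps -> exists eta, 0 < eta /\ forall a b, 0 <= a < delta -> a <= b -> b - a < eta ->
  norm (minus (T b y) (T a y)) < eps.
Proof.
  intro he. destruct (T_right H T HT y (eps / (M + 1))) as [eta [heta Heta]].
  { apply Rdiv_lt_0_compat; lra. }
  exists eta. split; auto. intros a b ha hab hba.
  replace b with (a + (b - a)) by ring.
  rewrite (T_sg H T HT) by lra.
  rewrite <- (T_minus H T HT) by lra.
  eapply Rle_lt_trans. apply Hb. lra.
  assert (Hn : norm (minus (T (b - a) y) y) < eps / (M + 1)) by (apply Heta; lra).
  pose proof (norm_ge_0 (minus (T (b - a) y) y)).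
  apply Rle_lt_trans with (M * (eps / (M + 1))). apply Rmult_le_compat_l; lra.
  apply Rlt_le_trans with ((M + 1) * (eps / (M + 1))). apply Rmult_lt_compat_r. apply Rdiv_lt_0_compat; lra. lra.
  right. field. lra.
Qed.

Definition fy (y : H) (r : R) : HR H := T (Rmax 0 r) y.

Lemma fy_cont y r : r < delta -> continuous (fy y) r.
Proof.
  intro hr.
  apply (proj2 (@filterlim_locally_ball_norm _ _ HN _ _ (fy y) (fy y r))). intros eps.
  destruct (orbit_core y eps (cond_pos eps)) as [eta [heta Heta]].
  assert (hmr : Rmax 0 r < delta) by (unfold Rmax; destruct Rle_dec; lra).
  assert (hpos : 0 < Rmin eta (delta - Rmax 0 r)) by (apply Rmin_glb_lt; lra).
  exists (mkposreal _ hpos). intros s Hs. apply R_ball_inv in Hs. simpl in Hs.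
  unfold ball_norm, fy.
  pose proof (Rmax_lip s r) as Hl. pose proof (Rmin_l eta (delta - Rmax 0 r)). pose proof (Rmin_r eta (delta - Rmax 0 r)).
  pose proof (Rmax_l 0 s). pose proof (Rmax_l 0 r).
  assert (Ha : Rabs (Rmax 0 s - Rmax 0 r) < eta) by lra. apply Rabs_def2 in Ha.
  destruct (Rle_dec (Rmax 0 s) (Rmax 0 r)) as [h|h].
  - rewrite (norm_minus_sym H). apply Heta; lra.
  - apply Heta; lra.
Qed.



Lemma fy_ex y a b : a <= b -> b < delta -> ex_RInt (V := HR H) (fy y) a b.
Proof.
  intros hab hb. apply ex_RInt_continuous. intros s [h1 h2].
  apply fy_cont. rewrite Rmax_right in h2 by lra. lra.
Qed.

Lemma fy_pos y r : 0 <= r -> fy y r = T r y.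
Proof. intro hr. unfold fy. rewrite Rmax_right by lra. reflexivity. Qed.

Lemma avg_lemma y a kappa : 0 <= a < delta -> 0 < kappa -> exists eta, 0 < eta /\ forall e, 0 < e < eta -> a + e < delta ->
  norm (minus (@scal _ HM (RtoC (/ e)) (RInt (V := HR H) (fy y) a (a + e))) (T a y)) <= kappa.
Proof.
  intros ha hk. destruct (orbit_core y kappa hk) as [eta [heta Heta]].
  exists eta. split; auto. intros e he hae.
  set (I := RInt (V := HR H) (fy y) a (a + e)).
  assert (HI : is_RInt (V := HRN) (fy y) a (a + e) I) by (apply RInt_correct; apply fy_ex; lra).
  assert (HI2 := is_RInt_minus (V := HRN) _ _ _ _ _ _ HI (is_RInt_const (V := HRN) a (a + e) (fy y a))).
  assert (Hbound : forall s, a <= s <= a + e -> norm (minus (fy y s) (fy y a)) <= kappa).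
  { intros s hs. unfold fy. rewrite !Rmax_right by lra. left; apply Heta; lra. }
  pose proof (norm_RInt_le (V := HRN) (fun s => minus (fy y s) (fy y a)) (fun _ => kappa) a (a + e) _ _
    ltac:(lra) Hbound HI2 (is_RInt_const a (a + e) kappa)) as Hle.
  change (norm (minus I (@scal _ HM (RtoC (a + e - a)) (fy y a))) <= scal (a + e - a) kappa) in Hle.
  replace (a + e - a) with e in Hle by ring.
  rewrite fy_pos in Hle by lra.
  change (scal e kappa) with (e * kappa) in Hle.
  assert (E : minus (@scal _ HM (RtoC (/ e)) I) (T a y) = @scal _ HM (RtoC (/ e)) (minus I (@scal _ HM (RtoC e) (T a y)))).
  { rewrite (@scal_minus_distr_l _ HM), (@scal_assoc _ HM).
    transitivity (minus (@scal _ HM (RtoC (/ e)) I) (@scal _ HM (one : C_AbsRing) (T a y))).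
    { f_equal. symmetry. exact (@scal_one _ HM _). }
    f_equal. f_equal. apply injective_projections; unfold mult, one; simpl; unfold Cmult, RtoC; simpl; field; lra. }
  rewrite E, (norm_scalR H ip Hip), Rabs_right.
  2:{ apply Rle_ge, Rlt_le, Rinv_0_lt_compat; lra. }
  apply Rmult_le_reg_l with e. lra. rewrite <- Rmult_assoc, Rinv_r, Rmult_1_l by lra. exact Hle.
Qed.



Lemma small_preserve (A : op H) (HA : is_generator H T A) (z : H)
  (Hperp : forall x, dom A x -> ip (app A x) z = RtoC 0) h y :
  0 < h < delta / 2 -> ip (T h y) z = ip y z.
Proof.
  intro hh.
  set (f := fy y).
  set (w := RInt (V := HR H) f 0 h).
  set (L := minus (T h y) y).
  assert (Hdq : forall e, 0 < e < delta / 2 -> diffq H T w e =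
     minus (@scal _ HM (RtoC (/ e)) (RInt (V := HR H) f h (h + e)))
           (@scal _ HM (RtoC (/ e)) (RInt (V := HR H) f 0 (0 + e)))).
  { intros e he.
    assert (HBL : bounded_linear H (T e)) by (apply HT; lra).
    pose proof (is_RInt_BL H (T e) HBL f 0 h w (RInt_correct _ _ _ (fy_ex y 0 h ltac:(lra) ltac:(lra)))) as I1.
    assert (I2 : is_RInt (V := HRN) (fun r => T e (f r)) 0 h (RInt (V := HR H) f e (h + e))).
    { pose proof (RInt_correct (V := HR H) f e (h + e) (fy_ex y e (h + e) ltac:(lra) ltac:(lra))) as J.
      assert (J' : is_RInt (V := HRN) f (1 * 0 + e) (1 * h + e) (RInt (V := HR H) f e (h + e))).
      { replace (1 * 0 + e) with e by ring. replace (1 * h + e) with (h + e) by ring. exact J. }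
      apply is_RInt_comp_lin in J'.
      eapply is_RInt_ext; [|exact J']. intros r hr. rewrite Rmin_left, Rmax_right in hr by lra.
      transitivity (f (1 * r + e)). exact (@scal_one _ (CompleteNormedModule.ModuleSpace R_AbsRing (HR H)) _).
      unfold f, fy. rewrite !Rmax_right by lra. replace (1 * r + e) with (e + r) by ring. apply (T_sg H T HT); lra. }
    assert (Te : T e w = RInt (V := HR H) f e (h + e)).
    { rewrite <- (is_RInt_unique _ _ _ _ I1). apply (is_RInt_unique _ _ _ _ I2). }
    assert (E1 := RInt_Chasles (V := HR H) f 0 h (h + e) (fy_ex y 0 h ltac:(lra) ltac:(lra)) (fy_ex y h (h + e) ltac:(lra) ltac:(lra))).
    assert (E2 := RInt_Chasles (V := HR H) f 0 e (h + e) (fy_ex y 0 e ltac:(lra) ltac:(lra)) (fy_ex y e (h + e) ltac:(lra) ltac:(lra))).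
    assert (E3 : minus (T e w) w = minus (RInt (V := HR H) f h (h + e)) (RInt (V := HR H) f 0 (0 + e))).
    { rewrite Te. replace (0 + e) with e by ring. apply (@g_swap HG). rewrite E2. exact E1. }
    unfold diffq. rewrite E3. apply (@scal_minus_distr_l _ HM). }
  assert (Hlim : filterlim (diffq H T w) (at_right 0) (locally L)).
  { apply (proj2 (@filterlim_locally_ball_norm _ _ HN _ _ (diffq H T w) L)). intro eps.
    pose proof (cond_pos eps) as hep.
    destruct (avg_lemma y h (eps / 3)) as [e1 [he1 He1]]. lra. lra.
    destruct (avg_lemma y 0 (eps / 3)) as [e2 [he2 He2]]. lra. lra.
    assert (hpos : 0 < Rmin (Rmin e1 e2) (delta / 2)) by (repeat apply Rmin_glb_lt; lra).
    exists (mkposreal _ hpos). intros e He hpe. apply R_ball_inv in He. simpl in He.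
    rewrite Rminus_0_r, Rabs_right in He by lra.
    pose proof (Rmin_l (Rmin e1 e2) (delta / 2)). pose proof (Rmin_r (Rmin e1 e2) (delta / 2)).
    pose proof (Rmin_l e1 e2). pose proof (Rmin_r e1 e2).
    unfold ball_norm. rewrite Hdq by lra.
    unfold L. rewrite <- (T_0 H T HT y) at 2.
    rewrite (@g_4 HG).
    eapply Rle_lt_trans. apply (norm_minus_le H).
    pose proof (He1 e ltac:(lra) ltac:(lra)) as K1.
    pose proof (He2 e ltac:(lra) ltac:(lra)) as K2.
    apply Rle_lt_trans with (eps / 3 + eps / 3); [apply Rplus_le_compat; [exact K1 | exact K2] | lra]. }
  destruct (HA w) as [Hd Hl].
  assert (Hdom : dom A w) by (apply Hd; exists L; exact Hlim).
  pose proof (Hl Hdom) as Hlim2.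
  assert (EA : app A w = L).
  { apply (filterlim_locally_unique (F := at_right 0) (diffq H T w)); try assumption;
    try (apply Proper_StrongProper, at_right_proper_filter). }
  pose proof (Hperp w Hdom) as Hp. rewrite EA in Hp. unfold L in Hp.
  rewrite (ip_minus_l H ip Hip) in Hp.
  destruct (ip (T h y) z) as [a1 a2], (ip y z) as [b1 b2]. unfold Cminus, Cplus, Copp, RtoC in Hp. simpl in Hp.
  injection Hp. intros. apply injective_projections; simpl; lra.
Qed.

End Orbit.

Section Final.
Context (H : CompleteNormedModule C_AbsRing) (ip : H -> H -> C) (Hip : is_inner_product H ip).
Local Notation HG := (CompleteNormedModule.AbelianGroup C_AbsRing H).
Local Notation HM := (CompleteNormedModule.ModuleSpace C_AbsRing H).
Local Notation HN := (CompleteNormedModule.NormedModule C_AbsRing H).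

Lemma closure_perp (L B : op H) (z : H) (Hz0 : z <> zero)
  (HB : is_closure H (lcomp H (projQ H ip z) L) B) x :
  dom B x -> ip (app B x) z = RtoC 0.
Proof.
  intro Hdx. set (y := app B x).
  assert (Happ := proj1 (HB x y) (conj Hdx eq_refl)).
  assert (Hc : Cmod (ip y z) <= 0).
  { apply Rle_plus_epsilon. intros e he. rewrite Rplus_0_l.
    pose proof (nz_pos H z Hz0) as hz.
    destruct (Happ (e / norm z)) as [a [Ha [_ Hn]]]. apply Rdiv_lt_0_compat; lra.
    simpl in Hn.
    assert (E : ip (minus (projQ H ip z (app L a)) y) z = Copp (ip y z)).
    { rewrite (ip_minus_l H ip Hip), (ip_Q H ip Hip z Hz0). destruct (ip y z). ceq. }
    pose proof (CS H ip Hip (minus (projQ H ip z (app L a)) y) z) as Hcs.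
    rewrite E in Hcs. unfold Cmod in Hcs |- *. destruct (ip y z) as [p1 p2]. simpl in Hcs |- *.
    replace (- p1 * (- p1 * 1) + - p2 * (- p2 * 1)) with (p1 * (p1 * 1) + p2 * (p2 * 1)) in Hcs by ring.
    eapply Rle_trans. exact Hcs.
    apply Rle_trans with (e / norm z * norm z). apply Rmult_le_compat_r; lra.
    right. field. lra. }
  apply Cmod_eq_0. pose proof (Cmod_ge_0 (ip y z)). lra.
Qed.

Lemma preserve_all (T : R -> H -> H) (HT : C0_semigroup H T) (A : op H) (HA : is_generator H T A) (z : H)
  (Hperp : forall x, dom A x -> ip (app A x) z = RtoC 0) s y :
  0 <= s -> ip (T s y) z = ip y z.
Proof.
  intro hs.
  destruct (T_locbound H ip Hip T HT) as [delta [hd [M [hM Hb]]]].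
  set (eta := delta / 3).
  assert (heta : 0 < eta) by (unfold eta; lra).
  assert (Hbase : forall h v, 0 <= h <= eta -> ip (T h v) z = ip v z).
  { intros h v [h0 h1]. destruct h0 as [h0|h0].
    - apply (small_preserve H ip Hip T HT delta M hd hM Hb A HA z Hperp). unfold eta in h1. lra.
    - subst h. rewrite (T_0 H T HT). reflexivity. }
  assert (Hind : forall n : nat, forall s v, 0 <= s <= INR n * eta -> ip (T s v) z = ip v z).
  { induction n; intros s' v hs'.
    - simpl in hs'. apply Hbase. split; [lra|]. rewrite Rmult_0_l in hs'. lra.
    - rewrite S_INR in hs'. destruct (Rle_dec s' eta) as [h|h].
      + apply Hbase. lra.
      + replace s' with (eta + (s' - eta)) by ring.
        rewrite (T_sg H T HT) by (unfold eta in *; lra).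
        rewrite Hbase by (unfold eta in *; lra).
        apply IHn. lra. }
  destruct (INR_unbounded (s / eta)) as [n hn].
  apply (Hind n s y). split; auto.
  apply Rlt_le. replace s with ((s / eta) * eta) at 1 by (field; lra).
  apply Rmult_lt_compat_r; lra.
Qed.
End Final.

Theorem lemma2 (H : CompleteNormedModule C_AbsRing) (ip : H -> H -> C)
  (Hip : is_inner_product H ip)
  (U : R -> H -> H) (L : op H)
  (HU : C0_semigroup H U) (HL : is_generator H U L)
  (z : H) (Hz : in_adj_dom H ip L z) (Hz0 : z <> zero)
  (QLbar : op H) (HQLbar : is_closure H (lcomp H (projQ H ip z) L) QLbar)
  (T : R -> H -> H) (HT : C0_semigroup H T) (HTgen : is_generator H T QLbar) :
  C0_semigroup H (fun t x => plus (projP H ip z x) (T t (projQ H ip z x))) /\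
  is_generator H (fun t x => plus (projP H ip z x) (T t (projQ H ip z x)))
    (rcomp H QLbar (projQ H ip z)).
Proof.
  assert (Hpres : forall s y, 0 <= s -> ip (T s y) z = ip y z).
  { intros s y hs. apply (preserve_all H ip Hip T HT QLbar HTgen z); auto.
    intros x hx. apply (closure_perp H ip Hip L QLbar z Hz0 HQLbar x hx). }
  assert (HPT : forall s y, 0 <= s -> (projP H ip z) (T s y) = (projP H ip z) y).
  { intros s y hs. apply (P_ext H ip z). apply Hpres; auto. }
  assert (HQTQ : forall s x, 0 <= s -> (projQ H ip z) (T s ((projQ H ip z) x)) = T s ((projQ H ip z) x)).
  { intros s x hs. apply (Q_of_ip0 H ip z). rewrite Hpres; auto. apply (ip_Q H ip Hip z Hz0). }
  assert (Hdq : forall x h, diffq H (fun t x => plus ((projP H ip z) x) (T t ((projQ H ip z) x))) x h = diffq H T ((projQ H ip z) x) h).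
  { intros x h. unfold diffq. f_equal.
     transitivity (minus (plus ((projP H ip z) x) (T h ((projQ H ip z) x))) (plus ((projP H ip z) x) ((projQ H ip z) x))).
    { f_equal. symmetry. apply (PQ_sum H ip z x). }
    apply (@g_mpp (CompleteNormedModule.AbelianGroup C_AbsRing H)). }
  split; [split; [|split; [|split]]|].
  - intros t ht. split; [|split].
    + intros x y.  rewrite (P_plus H ip Hip z), (Q_plus H ip Hip z), (T_plus H T HT) by auto.
      apply (@g_pp (CompleteNormedModule.AbelianGroup C_AbsRing H)).
    + intros a x.  rewrite (P_scal H ip Hip z), (Q_scal H ip Hip z), (T_scal H T HT) by auto.
      symmetry. apply (@scal_distr_l _ (CompleteNormedModule.ModuleSpace C_AbsRing H)).
    + destruct (T_bnd H T HT t ht) as [M HM]. exists (1 + 2 * Rmax M 0). intros x. 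
      eapply Rle_trans. apply (@norm_triangle _ (CompleteNormedModule.NormedModule C_AbsRing H)).
      pose proof (normP H ip Hip z Hz0 x). pose proof (normQ H ip Hip z Hz0 x).
      pose proof (HM ((projQ H ip z) x)). pose proof (Rmax_l M 0). pose proof (Rmax_r M 0).
      pose proof (norm_ge_0 ((projQ H ip z) x)). pose proof (norm_ge_0 x).
      assert (norm (T t ((projQ H ip z) x)) <= Rmax M 0 * (2 * norm x)).
      { eapply Rle_trans. eassumption. apply Rle_trans with (Rmax M 0 * norm ((projQ H ip z) x)). apply Rmult_le_compat_r; auto.
        apply Rmult_le_compat_l; auto. }
       lra.
  - intros x.  rewrite (T_0 H T HT). apply (PQ_sum H ip z).
  - intros t s x ht hs. 
    rewrite (T_sg H T HT) by auto.
    rewrite (P_plus H ip Hip z), (Q_plus H ip Hip z).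
    rewrite (P_P H ip Hip z Hz0), HPT by auto. rewrite (P_Q H ip Hip z Hz0).
    rewrite (Q_P H ip Hip z Hz0), HQTQ by auto.
    rewrite (@plus_zero_r (CompleteNormedModule.AbelianGroup C_AbsRing H)).
    rewrite (@plus_zero_l (CompleteNormedModule.AbelianGroup C_AbsRing H)). reflexivity.
  - intros x. 
    apply (proj2 (@filterlim_locally_ball_norm _ _ (CompleteNormedModule.NormedModule C_AbsRing H) _ _ _ x)).
    intro eps. destruct (T_right H T HT ((projQ H ip z) x) eps (cond_pos eps)) as [eta [heta Heta]].
    exists (mkposreal eta heta). intros h Hh hpos. apply R_ball_inv in Hh. simpl in Hh.
    rewrite Rminus_0_r, Rabs_right in Hh by lra.
    unfold ball_norm.
    replace (minus (plus ((projP H ip z) x) (T h ((projQ H ip z) x))) x) with (minus (T h ((projQ H ip z) x)) ((projQ H ip z) x)). apply Heta. lra.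
    transitivity (minus (plus ((projP H ip z) x) (T h ((projQ H ip z) x))) (plus ((projP H ip z) x) ((projQ H ip z) x))).
    { symmetry. apply (@g_mpp (CompleteNormedModule.AbelianGroup C_AbsRing H)). }
    f_equal. apply (PQ_sum H ip z x).
  - intros x. destruct (HTgen ((projQ H ip z) x)) as [Hd Hl]. split.
    + simpl. fold (projQ H ip z). rewrite Hd. split; intros [y Hy]; exists y;
        (eapply filterlim_ext; [|exact Hy]); intro h; simpl; rewrite ?Hdq; auto.
    + simpl. fold (projQ H ip z). intro Hdom. eapply filterlim_ext; [|exact (Hl Hdom)].
      intro h. rewrite Hdq. reflexivity.
Qed.
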